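(* Let $\epsilon>0$, $\rho\ge 1+\epsilon$, $S\ge 0$, and let $\beta_1, \dots, \beta_k$ be nonnegative reals such that $1+\epsilon \leq \beta_i \leq \rho$ for all $i$ and $\sum_{i=1}^k \beta_i \geq S$. Then \[ \prod_{i=1}^k \beta_i \geq \min\left\{ \rho^{S/{\rho}},\ (1+\epsilon)^{S/{(1+\epsilon)}} \right\}. \] *)

(* Defs.v *)
From Stdlib Require Import Reals.
Open Scope R_scope.

Fixpoint rsum (b : nat -> R) (k : nat) : R :=
  match k with O => 0 | S k' => rsum b k' + b k' end.
Fixpoint rprod (b : nat -> R) (k : nat) : R :=
  match k with O => 1 | S k' => rprod b k' * b k' end.

(* Main.v *)
Require Import Defs.
From Stdlib Require Import Reals Lra Lia.
Open Scope R_scope.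

Lemma ln_tangent (x y : R) : 0 < x -> 0 < y -> ln y <= ln x + (y - x) / x.
Proof.
  intros hx hy.
  assert (h1 : ln (y / x) <= y / x - 1).
  { destruct (Req_dec (ln (y/x)) 0) as [e|ne].
    - rewrite e. pose proof (exp_ineq1_le (ln (y/x))) as H.
      rewrite exp_ln in H by (apply Rdiv_lt_0_compat; lra). lra.
    - pose proof (exp_ineq1_le (ln (y/x))) as H.
      rewrite exp_ln in H by (apply Rdiv_lt_0_compat; lra). lra. }
  unfold Rdiv in h1. rewrite ln_mult in h1 by (try apply Rinv_0_lt_compat; lra).
  rewrite ln_Rinv in h1 by lra.
  replace ((y - x) / x) with (y * / x - 1) by (field; lra). lra.
Qed.

Lemma key (a b x c : R) : 0 < a -> a <= x <= b ->
  ln a >= c * a -> ln b >= c * b -> ln x >= c * x.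
Proof.
  intros ha hx hA hB.
  assert (hxp : 0 < x) by lra. assert (hbp : 0 < b) by lra.
  pose proof (ln_tangent x a hxp ha) as T1.
  pose proof (ln_tangent x b hxp hbp) as T2.
  assert (E : (b - x) * ((a - x) / x) + (x - a) * ((b - x) / x) = 0) by (field; lra).
  assert (H : (b - x) * ln a + (x - a) * ln b <= (b - a) * ln x).
  { assert (Q1 : (b - x) * ln a <= (b - x) * (ln x + (a - x)/x)) by (apply Rmult_le_compat_l; lra).
    assert (Q2 : (x - a) * ln b <= (x - a) * (ln x + (b - x)/x)) by (apply Rmult_le_compat_l; lra).
    nra. }
  destruct (Req_dec a b) as [e|ne].
  - subst b. assert (x = a) by lra. subst. lra.
  - assert (H2 : (b - a) * (c * x) <= (b - a) * ln x) by nra.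
    apply Rle_ge. apply (Rmult_le_reg_l (b - a)); lra.
Qed.

Lemma exp_mono x y : x <= y -> exp x <= exp y.
Proof. intros h. destruct (Req_dec x y). subst; lra. left; apply exp_increasing; lra. Qed.

Theorem lemmaA1 (eps rho S : R) (k : nat) (beta : nat -> R)
  (heps : 0 < eps) (hrho : 1 + eps <= rho) (hS : 0 <= S)
  (hnn : forall i, (i < k)%nat -> 0 <= beta i)
  (hb : forall i, (i < k)%nat -> 1 + eps <= beta i <= rho)
  (hsum : rsum beta k >= S) :
  rprod beta k >= Rmin (Rpower rho (S / rho)) (Rpower (1 + eps) (S / (1 + eps))).
Proof.
  set (a := 1 + eps) in *.
  set (c := Rmin (ln rho / rho) (ln a / a)).
  assert (ha : 1 < a) by (unfold a; lra).
  assert (la : 0 < ln a) by (rewrite <- ln_1; apply ln_increasing; lra).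
  assert (lr : 0 < ln rho) by (rewrite <- ln_1; apply ln_increasing; lra).
  assert (hc : 0 <= c).
  { unfold c, Rmin. destruct (Rle_dec _ _); apply Rlt_le, Rdiv_lt_0_compat; lra. }
  assert (cA : ln a >= c * a).
  { assert (c <= ln a / a) by apply Rmin_r.
    assert (c * a <= ln a / a * a) by (apply Rmult_le_compat_r; lra).
    replace (ln a / a * a) with (ln a) in * by (field; lra). lra. }
  assert (cB : ln rho >= c * rho).
  { assert (c <= ln rho / rho) by apply Rmin_l.
    assert (c * rho <= ln rho / rho * rho) by (apply Rmult_le_compat_r; lra).
    replace (ln rho / rho * rho) with (ln rho) in * by (field; lra). lra. }
  assert (IH : forall n, (n <= k)%nat -> 0 < rprod beta n /\ ln (rprod beta n) >= c * rsum beta n).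
  { induction n as [|n IHn]; intros hn.
    - simpl. rewrite ln_1. lra.
    - destruct IHn as [p q]; [lia|].
      assert (hbn := hb n ltac:(lia)).
      simpl. assert (0 < beta n) by lra. split.
      + apply Rmult_lt_0_compat; lra.
      + rewrite ln_mult by lra.
        pose proof (key a rho (beta n) c ltac:(lra) hbn cA cB). lra. }
  destruct (IH k (le_n k)) as [p q].
  assert (hge : rprod beta k >= exp (c * S)).
  { rewrite <- (exp_ln (rprod beta k)) by lra.
    apply Rle_ge. apply exp_mono.
    assert (c * S <= c * rsum beta k) by (apply Rmult_le_compat_l; lra). lra. }
  unfold Rpower. fold a.
  assert (M : exp (c * S) >= Rmin (exp (S / rho * ln rho)) (exp (S / a * ln a))).
  { unfold c. destruct (Rle_dec (ln rho / rho) (ln a / a)).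
    - rewrite (Rmin_left (ln rho / rho)) by lra.
      replace (S / rho * ln rho) with (ln rho / rho * S) by (field; lra).
      apply Rle_ge, Rmin_l.
    - rewrite (Rmin_right (ln rho / rho)) by lra.
      replace (S / a * ln a) with (ln a / a * S) by (field; lra).
      apply Rle_ge, Rmin_r. }
  lra.
Qed.
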